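(* Let $p$ be an odd prime and $\alpha$ an indeterminate over $\mathbb F_p$. The coefficients of the polynomial \[ G^{(\alpha)}(X)=-\sum_{k=1}^{p-1}\frac{1}{k}\,\frac{X^{k}}{\prod_{s=1}^{k-1}b_{1,s}(\alpha)}\in\mathbb F_p(\alpha)[X] \] (empty product equal to $1$) belong to the subring $\mathbb F_p[\alpha,(\alpha^{p-1}-1)^{-1}]$ of $\mathbb F_p(\alpha)$.
   Context: $\mathbb F_p$ is the field of $p$ elements, $\binom{x}{m}=x(x-1)\cdots(x-m+1)/m!$. For integers $0<r,s<p$ (interpreted as elements of $\mathbb F_p$), $b_{r,s}(\alpha)=\sum_{k=0}^{p-1}(-r/s)^k\binom{r\alpha-1}{p-1-k}\binom{s\alpha-1}{k}\in\mathbb F_p[\alpha]$. *)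

(* Defs.v *)
From HB Require Import structures.
From mathcomp Require Import all_boot all_order all_algebra.
Set Implicit Arguments. Unset Strict Implicit. Unset Printing Implicit Defensive.
Import GRing.Theory.
Local Open Scope ring_scope.

(* Generalized binomial coefficient of a polynomial:
   binom x m = x (x-1) ... (x-m+1) / m!  (m! must be invertible in F). *)
Definition binom_poly (F : fieldType) (x : {poly F}) (m : nat) : {poly F} :=
  (m`!%:R)^-1 *: \prod_(i < m) (x - (i%:R)%:P).

Definition b_poly (p r s : nat) : {poly 'F_p} :=
  \sum_(k < p) ((- ((r%:R : 'F_p) / (s%:R : 'F_p))) ^+ k) *:
     (binom_poly (r%:R *: 'X - 1) (p.-1 - k) * binom_poly (s%:R *: 'X - 1) k).

Notation Fpalpha p := {fraction {poly 'F_p}}.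

Definition G_poly (p : nat) : {poly Fpalpha p} :=
  - \sum_(1 <= k < p)
      (((k%:R : Fpalpha p)^-1 /
         \prod_(1 <= s < k) FracField.tofrac (b_poly p 1 s)) *: 'X^k).

Definition in_loc_ring (p : nat) (c : Fpalpha p) : Prop :=
  exists (f : {poly 'F_p}) (n : nat),
    c = FracField.tofrac f / (FracField.tofrac ('X^(p.-1) - 1)) ^+ n.

(* Main.v *)
Require Import Defs.
From mathcomp Require Import all_boot all_order all_algebra.
From mathcomp Require Import all_field.
From mathcomp Require Import zify ring.
Set Implicit Arguments. Unset Strict Implicit. Unset Printing Implicit Defensive.
Import GRing.Theory.
Local Open Scope ring_scope.

Section S.
Variable p : nat.
Hypothesis hp : prime p.

Lemma natFp_eq0 n : ((n%:R : 'F_p) == 0) = (p %| n)%N.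
Proof. by rewrite (dvdn_pcharf (pchar_Fp hp)). Qed.

Lemma natFp_neq0 n : (0 < n < p)%N -> (n%:R : 'F_p) != 0.
Proof.
move=> /andP[h0 h1]; rewrite natFp_eq0; apply/negP => /dvdn_leq.
by move=> /(_ h0); rewrite leqNgt h1.
Qed.

Lemma fact_Fp_neq0 n : (n < p)%N -> (n`!%:R : 'F_p) != 0.
Proof.
elim: n => [|n IH] hn; first by rewrite fact0 oner_eq0.
rewrite factS natrM mulf_neq0 //; last by apply: IH; lia.
by apply: natFp_neq0; lia.
Qed.

Lemma binomS (b : {poly 'F_p}) i : (i.+1 < p)%N ->
  (i.+1)%:R *: binom_poly b i.+1 = (b - (i%:R)%:P) * binom_poly b i.
Proof.
move=> hi; rewrite /binom_poly big_ord_recr /= scalerA [RHS]mulrC -scalerAl.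
congr (_ *: _); rewrite factS natrM invfM mulrA mulfV ?mul1r //.
by apply: natFp_neq0; lia.
Qed.

Variables (be ga : {poly 'F_p}) (t : 'F_p).
Definition ff i := binom_poly be i.
Definition gg l := t ^+ l *: binom_poly ga l.
Definition KK n := \sum_(l < n.+1) ff (n - l) * gg l.
Definition AA n := \sum_(l < n.+1) (n - l)%:R *: (ff (n - l) * gg l).
Definition BB n := \sum_(l < n.+1) l%:R *: (ff (n - l) * gg l).

Lemma AA_rec n : (n.+1 < p)%N -> AA n.+1 = be * KK n - AA n.
Proof.
move=> hn; rewrite /AA big_ord_recr /= subnn scale0r addr0.
rewrite /KK mulr_sumr -sumrB; apply: eq_bigr => [[l hl]] _ /=.
have -> : (n.+1 - l = (n - l).+1)%N by lia.
rewrite scalerAl /ff binomS; last by lia.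
by rewrite -mulrA mulrBl mul_polyC.
Qed.

Lemma BB_rec n : (n.+1 < p)%N -> BB n.+1 = t *: (ga * KK n) - t *: BB n.
Proof.
move=> hn; rewrite /BB big_ord_recl /= scale0r add0r.
rewrite /KK mulr_sumr !scaler_sumr -sumrB; apply: eq_bigr => [[l hl]] _ /=.
rewrite /bump /= add1n subSS.
rewrite scalerAr /gg scalerA [_.+1%:R * _]mulrC -scalerA binomS; last by lia.
rewrite -!mul_polyC !rmorphXn /= exprS; ring.
Qed.

Lemma KK_AB n : n%:R *: KK n = AA n + BB n.
Proof.
rewrite /KK /AA /BB scaler_sumr -big_split; apply: eq_bigr => [[l hl]] _ /=.
by rewrite -scalerDl -natrD; congr (_%:R *: _); lia.
Qed.

Variable c : 'F_p.
Hypothesis hbg : be + t *: ga = c%:P.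
Hypothesis hbe : (size be <= 2)%N.
Hypothesis hga : (size ga <= 2)%N.

Lemma KK_rec n : (n.+1 < p)%N ->
  (n.+1)%:R *: KK n.+1 = c *: KK n - AA n - t *: BB n.
Proof.
move=> hn; rewrite KK_AB AA_rec // BB_rec //.
rewrite -[c *: KK n]mul_polyC -hbg -!mul_polyC; ring.
Qed.

Lemma KK_size n : (n < p)%N ->
  [/\ (2 * size (KK n) <= n + 2)%N, (2 * size (AA n) <= n + 3)%N &
      (2 * size (BB n) <= n + 3)%N].
Proof.
elim: n => [|n IH] hn.
  rewrite /KK /AA /BB !big_ord1 /= !scale0r size_poly0.
  rewrite /ff /gg /binom_poly !big_ord0 fact0 invr1 !scale1r.
  by rewrite mulr1 size_poly1.
have [h1 h2 h3] := IH (ltnW hn).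
have sA : (2 * size (AA n.+1) <= n.+1 + 3)%N.
  rewrite AA_rec //.
  have := size_polyD (be * KK n) (- AA n); rewrite size_polyN.
  have := size_polyMleq be (KK n).
  set x1 := size (be * KK n). set x2 := size (be * KK n - AA n). set x3 := size (KK n).
  set x4 := size (AA n). set x5 := size be.
  have h1' : (2 * x3 <= n + 2)%N by exact h1.
  have h2' : (2 * x4 <= n + 3)%N by exact h2.
  have h5 : (x5 <= 2)%N by exact hbe.
  clearbody x1 x2 x3 x4 x5; move: h1' h2' h5; clear; lia.
have sB : (2 * size (BB n.+1) <= n.+1 + 3)%N.
  rewrite BB_rec //.
  have := size_polyD (t *: (ga * KK n)) (- (t *: BB n)); rewrite size_polyN.
  have := size_scale_leq t (ga * KK n); have := size_scale_leq t (BB n).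
  have := size_polyMleq ga (KK n).
  set x1 := size (ga * KK n). set x3 := size (KK n). set x6 := size (BB n).
  set x7 := size (t *: (ga * KK n)). set x8 := size (t *: BB n). set x9 := size ga.
  have h3' : (2 * x6 <= n + 3)%N by exact h3.
  have h1' : (2 * x3 <= n + 2)%N by exact h1.
  have h9 : (x9 <= 2)%N by exact hga.
  set y := size (t *: (ga * KK n) - t *: BB n).
  clearbody x1 x3 x6 x7 x8 x9 y; move: h3' h1' h9; clear; lia.
split=> //.
have hu : ((n.+1)%:R : 'F_p) != 0 by apply: natFp_neq0; lia.
have -> : KK n.+1 = ((n.+1)%:R)^-1 *: ((n.+1)%:R *: KK n.+1).
  by rewrite scalerA mulVf // scale1r.
rewrite KK_rec //.
have := size_scale_leq ((n.+1)%:R)^-1 (c *: KK n - AA n - t *: BB n).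
have := size_polyD (c *: KK n - AA n) (- (t *: BB n)); rewrite size_polyN.
have := size_polyD (c *: KK n) (- AA n); rewrite size_polyN.
have := size_scale_leq t (BB n); have := size_scale_leq c (KK n).
set y0 := size (((n.+1)%:R)^-1 *: (c *: KK n - AA n - t *: BB n)). set y1 := size (c *: KK n - AA n - t *: BB n).
set y2 := size (c *: KK n - AA n). set y3 := size (t *: BB n). set y4 := size (c *: KK n).
set x3 := size (KK n). set x4 := size (AA n). set x6 := size (BB n).
have h1' : (2 * x3 <= n + 2)%N by exact h1.
have h2' : (2 * x4 <= n + 3)%N by exact h2.
have h3' : (2 * x6 <= n + 3)%N by exact h3.
clearbody y0 y1 y2 y3 y4 x3 x4 x6; move: h1' h2' h3'; clear; lia.
Qed.

End S.


Section R.
Variable p : nat.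
Hypothesis hp : prime p.

Lemma binom_root (q : {poly 'F_p}) m x j : (j < m)%N -> q.[x] = j%:R ->
  (binom_poly q m).[x] = 0.
Proof.
move=> hj hq; rewrite /binom_poly hornerZ horner_prod (bigD1 (Ordinal hj)) //=.
by rewrite hornerD hornerN hornerC hq subrr mul0r mulr0.
Qed.

Lemma p_ndvd n : (0 < n < p)%N -> ~~ (p %| n)%N.
Proof.
move=> /andP[h0 h1]; apply/negP => /(dvdn_leq h0); rewrite leqNgt h1 //.
Qed.

Lemma mod_pos s a : (0 < s < p)%N -> (0 < a < p)%N -> (0 < s * a %% p)%N.
Proof.
move=> hs ha; rewrite lt0n; apply/negP => /eqP H.
have : (p %| s * a)%N by rewrite /dvdn H.
by rewrite Euclid_dvdM // (negbTE (p_ndvd hs)) (negbTE (p_ndvd ha)).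
Qed.

Definition Pr s a := (a + (s * a %% p) <= p)%N.

Lemma b_root s a : (0 < s < p)%N -> (0 < a < p)%N -> Pr s a ->
  root (b_poly p 1 s) a%:R.
Proof.
move=> hs ha hP; rewrite /root /b_poly horner_sum; apply/eqP; apply: big1 => [[k hk]] _ /=.
rewrite hornerZ hornerM.
have hr := mod_pos hs ha.
move: hP; rewrite /Pr; set r := (s * a %% p)%N => hP.
have [h1|h1] := ltnP (a - 1) (p.-1 - k).
  have -> : (binom_poly (1%:R *: 'X - 1 : {poly 'F_p}) (p.-1 - k)).[a%:R] = 0.
    apply: (binom_root h1).
    by rewrite !hornerE natrB ?mul1r //; lia.
  by rewrite mul0r mulr0.
have h2 : (r - 1 < k)%N by lia.
have -> : (binom_poly (s%:R *: 'X - 1 : {poly 'F_p}) k).[a%:R] = 0.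
  apply: (binom_root h2).
  rewrite !hornerE natrB; last by lia.
  by rewrite -natrM /r Fp_nat_mod.
by rewrite mulr0 mulr0.
Qed.

Lemma comp_mod s a : (0 < s < p)%N -> (0 < a < p)%N ->
  (s * a %% p + s * (p - a) %% p = p)%N.
Proof.
move=> hs ha.
have h1 := mod_pos hs ha.
have h2 : (0 < s * (p - a) %% p)%N by apply: mod_pos => //; lia.
have h3 : (s * a %% p < p)%N by apply: ltn_pmod; lia.
have h4 : (s * (p - a) %% p < p)%N by apply: ltn_pmod; lia.
have : (p %| s * a %% p + s * (p - a) %% p)%N.
  rewrite /dvdn modnDm -mulnDr subnKC; last by lia.
  by rewrite modnMl.
move=> /dvdnP[q hq]; move: hq h1 h2 h3 h4.
case: q => [|[|q]] hq; lia.
Qed.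

Lemma Pr_comp s a : (0 < s)%N -> (s.+1 < p)%N -> (0 < a < p)%N ->
  Pr s (p - a)%N = ~~ Pr s a.
Proof.
move=> hs hs1 ha; rewrite /Pr.
have hc := @comp_mod s a ltac:(lia) ha.
have hne : (a + s * a %% p != p)%N.
  apply/eqP => he.
  have : (p %| s.+1 * a)%N.
    rewrite /dvdn mulSn -modnDmr he modnn //.
  have hs2 : (0 < s.+1 < p)%N by lia.
  by rewrite Euclid_dvdM // (negbTE (p_ndvd hs2)) (negbTE (p_ndvd ha)).
move: hne hc; set r := (s * a %% p)%N; set r' := (s * (p - a) %% p)%N.
move=> hne hc.
apply/idP/idP; lia.
Qed.

Definition rs s : seq 'F_p := [seq a%:R | a <- [seq a <- iota 1 p.-1 | Pr s a]].

Lemma rs_uniq s : uniq (rs s).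
Proof.
rewrite map_inj_in_uniq ?filter_uniq ?iota_uniq // => x y.
rewrite !mem_filter !mem_iota => /andP[_ hx] /andP[_ hy] /(congr1 val).
rewrite /= !val_Fp_nat // !modn_small //; lia.
Qed.

Lemma rs_size s : (0 < s)%N -> (s.+1 < p)%N -> (2 * size (rs s) = p.-1)%N.
Proof.
move=> hs hs1; rewrite /rs size_map size_filter.
have := count_predC (Pr s) (iota 1 p.-1); rewrite size_iota.
have -> : count (predC (Pr s)) (iota 1 p.-1) = count (Pr s) (iota 1 p.-1).
  have -> : count (predC (Pr s)) (iota 1 p.-1) =
            count (Pr s) [seq (p - a)%N | a <- iota 1 p.-1].
    rewrite count_map; apply: eq_in_count => a; rewrite mem_iota => ha /=.
    rewrite Pr_comp //; lia.
  apply/permP; apply: uniq_perm; rewrite ?iota_uniq //.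
    rewrite map_inj_in_uniq ?iota_uniq // => x y; rewrite !mem_iota; lia.
  move=> x; rewrite mem_iota; apply/mapP/idP.
    by move=> [y]; rewrite mem_iota => hy ->; lia.
  move=> hx; exists (p - x)%N; rewrite ?mem_iota; lia.
move=> h; rewrite mul2n -addnn; exact: h.
Qed.

Lemma rs_roots s : (0 < s)%N -> (s.+1 < p)%N -> all (root (b_poly p 1 s)) (rs s).
Proof.
move=> hs hs1; apply/allP => z /mapP[a]; rewrite mem_filter mem_iota => /andP[hP ha] ->.
apply: b_root => //; lia.
Qed.

Lemma rs_nz s : all (fun z => z != 0) (rs s).
Proof.
apply/allP => z /mapP[a]; rewrite mem_filter mem_iota => /andP[hP ha] ->.
by rewrite -(dvdn_pcharf (pchar_Fp hp)) p_ndvd //; lia.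
Qed.

End R.


Section C.
Variable p : nat.
Hypothesis hp : prime p.

Definition DD : {poly 'F_p} := 'X^(p.-1) - 1.
Definition good (q : {poly 'F_p}) := q = 0 \/ exists h n, q * h = DD ^+ n.

Lemma fermat (z : 'F_p) : z != 0 -> z ^+ p.-1 = 1.
Proof.
move=> hz; have := expf_card z; rewrite card_Fp // => h.
apply: (mulfI hz); rewrite mulr1 -exprS prednK ?prime_gt0 //.
Qed.

Lemma prod_dvd (r : seq 'F_p) : all (fun z => z != 0) r ->
  \prod_(z <- r) ('X - z%:P) %| DD ^+ size r.
Proof.
elim: r => [|z r IH] /=; first by rewrite big_nil dvd1p.
move=> /andP[hz hr]; rewrite big_cons exprS dvdp_mul ?IH //.
by rewrite dvdp_XsubCl /root /DD !hornerE ?hornerXn fermat // subrr.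
Qed.

Lemma b_KK s : b_poly p 1 s =
  KK (1%:R *: 'X - 1) (s%:R *: 'X - 1) (- (1%:R / s%:R)) p.-1.
Proof.
rewrite /b_poly /KK prednK ?prime_gt0 //; apply: eq_bigr => [[k hk]] _ /=.
by rewrite /ff /gg scalerAr.
Qed.

Lemma size_lin (c : 'F_p) : (size ((c *: 'X - 1)%R : {poly 'F_p}) <= 2)%N.
Proof.
apply: (leq_trans (size_polyD _ _)); rewrite size_polyN size_poly1 geq_max /=.
by rewrite (leq_trans (size_scale_leq _ _)) ?size_polyX.
Qed.

Lemma b_good s : (0 < s)%N -> (s.+1 < p)%N -> good (b_poly p 1 s).
Proof.
move=> hs hs1.
have hsn : (s%:R : 'F_p) != 0 by apply: natFp_neq0 => //; lia.
have hbg : (1%:R *: 'X - 1) + (- (1%:R / s%:R)) *: (s%:R *: 'X - 1) =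
           (- (1 + - (1%:R / s%:R)))%:P :> {poly 'F_p}.
  rewrite scalerBr scalerA mulNr mul1r mulVf // scaleN1r scale1r.
  rewrite alg_polyC !(polyCN, polyCB, polyC1).
  ring.
have hpl : (p.-1 < p)%N by rewrite ltn_predL prime_gt0.
have [hK _ _] := KK_size hp hbg (size_lin _) (size_lin _) hpl.
rewrite -b_KK in hK.
set b := b_poly p 1 s in hK *.
have [->|hb0] := eqVneq b 0; first by left.
right.
have hu : uniq_roots (rs p s) by rewrite uniq_rootsE rs_uniq.
have [q hq] := uniq_roots_prod_XsubC (rs_roots hp hs hs1) hu.
rewrite -/b in hq.
have hP0 : \prod_(z <- rs p s) ('X - z%:P) != 0 by apply: monic_neq0; apply: monic_prod_XsubC.
have hq0 : q != 0 by apply: contraNneq hb0 => hq0; rewrite hq hq0 mul0r.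
have hsz := rs_size hp hs hs1.
have hsb : size b = (size q + size (rs p s))%N.
  by rewrite hq size_mul // size_prod_XsubC addnS.
have hq1 : (size q <= 1)%N.
  move: hK hsz; rewrite hsb. have := prime_gt0 hp. lia.
have hqc := size1_polyC hq1.
set c := q`_0 in hqc.
have hc : c != 0 by apply: contraNneq hq0 => hc0; rewrite hqc hc0.
have /dvdpP [w hw] := prod_dvd (rs_nz hp s).
exists (c^-1%:P * w), (size (rs p s)).
rewrite hw hq hqc.
have e : c%:P * c^-1%:P = 1 :> {poly 'F_p} by rewrite -polyCM mulfV.
rewrite -[RHS]mul1r -e; ring.
Qed.

End C.

Lemma gadd (F : fieldType) (a b E : F) n1 n2 : E != 0 ->
  a / E ^+ n1 + b / E ^+ n2 = (a * E ^+ n2 + b * E ^+ n1) / (E ^+ n1 * E ^+ n2).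
Proof. move=> hE; have h1 := expf_neq0 n1 hE; have h2 := expf_neq0 n2 hE; field; rewrite h1 h2 //. Qed.
Lemma gmul (F : fieldType) (a b E : F) n1 n2 :
  a / E ^+ n1 * (b / E ^+ n2) = (a * b) / (E ^+ n1 * E ^+ n2).
Proof. by rewrite invfM mulrACA. Qed.
Lemma ginv (F : fieldType) (q h E : F) : q * h = E -> E != 0 -> q^-1 = h / E.
Proof.
move=> <-; rewrite mulf_eq0 negb_or => /andP[h1 h2].
by rewrite invfM mulrCA mulfV // mulr1.
Qed.


Section D.
Variable p : nat.
Hypothesis hp : prime p.

Notation tf := (@FracField.tofrac _).

Lemma DD_neq0 : DD p != 0.
Proof.
by rewrite /DD -polyC1 monic_neq0 // monicXnsubC // -ltnS prednK ?prime_gt0 // prime_gt1.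
Qed.

Lemma E_neq0 : tf (DD p) != 0.
Proof. by rewrite tofrac_eq0 DD_neq0. Qed.

Lemma loc_frac f : @in_loc_ring p (tf f).
Proof. by exists f, 0%N; rewrite expr0 divr1. Qed.

Lemma loc_add c1 c2 : @in_loc_ring p c1 -> @in_loc_ring p c2 -> @in_loc_ring p (c1 + c2).
Proof.
move=> [f1 [n1 ->]] [f2 [n2 ->]].
exists (f1 * DD p ^+ n2 + f2 * DD p ^+ n1), (n1 + n2)%N.
have hE := E_neq0; rewrite /DD in hE *.
set E := tf ('X^(p.-1) - 1) in hE *.
rewrite rmorphD !rmorphM !rmorphXn /= -/E exprD.
exact: gadd.
Qed.

Lemma loc_mul c1 c2 : @in_loc_ring p c1 -> @in_loc_ring p c2 -> @in_loc_ring p (c1 * c2).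
Proof.
move=> [f1 [n1 ->]] [f2 [n2 ->]].
exists (f1 * f2), (n1 + n2)%N.
rewrite rmorphM /= exprD; exact: gmul.
Qed.

Lemma loc_opp c : @in_loc_ring p c -> @in_loc_ring p (- c).
Proof.
move=> [f [n ->]]; exists (- f), n.
by rewrite rmorphN mulNr.
Qed.

Lemma loc_inv q : good q -> @in_loc_ring p (tf q)^-1.
Proof.
case=> [->|[h [n hq]]]; first by rewrite rmorph0 invr0; apply: (loc_frac 0).
exists h, n.
have e : tf q * tf h = tf (DD p) ^+ n by rewrite -rmorphM hq rmorphXn.
have hE : tf (DD p) ^+ n != 0 by rewrite expf_neq0 // E_neq0.
rewrite /DD in e hE. apply: ginv; [exact: e | exact: hE].
Qed.

Lemma good_mul a b : @good p a -> good b -> good (a * b).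
Proof.
case=> [->|[h1 [n1 e1]]]; first by left; rewrite mul0r.
case=> [->|[h2 [n2 e2]]]; first by left; rewrite mulr0.
right; exists (h1 * h2), (n1 + n2)%N.
by rewrite exprD -e1 -e2; ring.
Qed.

Lemma good_C c : @good p c%:P.
Proof.
have [->|hc] := eqVneq c 0; first by left; rewrite polyC0.
right; exists c^-1%:P, 0%N.
by rewrite -polyCM mulfV // expr0.
Qed.

End D.

Theorem theorem5 (p : nat) (hp : prime p) (hodd : odd p) :
  forall i : nat, in_loc_ring (G_poly p)`_i.
Proof.
move=> i; rewrite /G_poly coefN; apply: loc_opp.
rewrite coef_sum big_nat_cond.
apply: (big_ind (fun c => @in_loc_ring p c)).
- by have := @loc_frac p 0; rewrite rmorph0.
- exact: loc_add.
move=> k /andP[/andP[hk1 hk2] _].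
rewrite coefZ coefXn.
apply: loc_mul; last by have := @loc_frac p (i == k)%:R; rewrite rmorph_nat.
apply: loc_mul.
  have hg : @good p k%:R by rewrite -polyC_natr; exact: good_C.
  by have := loc_inv hp hg; rewrite rmorph_nat.
rewrite -rmorph_prod; apply: loc_inv => //.
rewrite big_nat_cond; apply: (big_ind (@good p)).
- by rewrite -polyC1; exact: good_C.
- exact: good_mul.
move=> s /andP[/andP[hs1 hs2] _].
apply: b_good => //; lia.
Qed.

Print Assumptions theorem5.
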